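(* Let $\mathbf{A}\in\mathbb{R}^{n\times n}$ be symmetric positive definite with (2-norm) condition number $\kappa$, let $\mathbf{y}\in\mathbb{R}^n$, and let $\mathbf{x}=\mathbf{A}^{-1}\mathbf{y}$. Let $\{\mathbf{x}_i\}_{i=0}^n$ be the iterates of the conjugate gradient (CG) method applied to $\mathbf{A}\mathbf{x}=\mathbf{y}$ with initial guess $\mathbf{x}_0=0$. Let $1\le i_{\min}<i_{\max}\le n$ be integers and let $Q$ be a random variable supported on $\{i_{\min},\dots,i_{\max}\}$ with $\mathbb{P}(Q=j)>0$ for each $j$ in this set. Define the TSS-Solve estimator \[ \widetilde{\mathbf{x}}_{\mathrm{tss}}=\frac{\mathbf{x}_Q-\mathbf{x}_{Q-1}}{\mathbb{P}(Q)}+\mathbf{x}_{i_{\min}-1}, \] where $\mathbb{P}(Q)$ denotes $\mathbb{P}(Q=j)$ at the realized value $j$ of $Q$. Then \[ \mathbb{E}\big[\widetilde{\mathbf{x}}_{\mathrm{tss}}\big]=\mathbf{x}_{i_{\max}} \qquad\text{and}\qquad \mathrm{Var}\big(\widetilde{\mathbf{x}}_{\mathrm{tss}}\big)\le 16\,\kappa^2\,\|\mathbf{x}\|^2\,\Gamma, \] where \[ \Gamma:=\sum_{j=i_{\min}}^{i_{\max}}\frac{\varrho^{2(j-1)}}{\mathbb{P}(Q=j)},\qquad \varrho:=\frac{\sqrt{\kappa}-1}{\sqrt{\kappa}+1}\in[0,1). \]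
   Context: CG is the standard conjugate gradient method in exact arithmetic: with $\mathbf{r}_0=\mathbf{y}-\mathbf{A}\mathbf{x}_0$, $\mathbf{p}_0=\mathbf{r}_0$, and for $j\ge0$: $\alpha_j=\mathbf{r}_j^\top\mathbf{r}_j/(\mathbf{p}_j^\top\mathbf{A}\mathbf{p}_j)$, $\mathbf{x}_{j+1}=\mathbf{x}_j+\alpha_j\mathbf{p}_j$, $\mathbf{r}_{j+1}=\mathbf{r}_j-\alpha_j\mathbf{A}\mathbf{p}_j$, $\beta_j=\mathbf{r}_{j+1}^\top\mathbf{r}_{j+1}/(\mathbf{r}_j^\top\mathbf{r}_j)$, $\mathbf{p}_{j+1}=\mathbf{r}_{j+1}+\beta_j\mathbf{p}_j$ (once the residual vanishes, subsequent iterates equal the exact solution). $\|\cdot\|$ is the Euclidean norm, and for a vector-valued random variable $X$, $\mathrm{Var}(X):=\mathbb{E}\|X-\mathbb{E}X\|^2$. *)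

(* Defs.v *)
From HB Require Import structures.
From mathcomp Require Import all_boot all_order all_algebra.
From mathcomp Require Import classical_sets reals.
Set Implicit Arguments. Unset Strict Implicit. Unset Printing Implicit Defensive.
Import Order.TTheory GRing.Theory Num.Theory.
Local Open Scope ring_scope.
Local Open Scope classical_set_scope.

Section CGDefs.
Variable R : realType.

Definition dotv n (u v : 'cV[R]_n) : R := (u^T *m v) 0 0.
Definition normv n (u : 'cV[R]_n) : R := Num.sqrt (dotv u u).

Definition spd n (A : 'M[R]_n) : Prop :=
  A^T = A /\ forall v : 'cV[R]_n, v != 0 -> 0 < dotv v (A *m v).

Definition opnorm2 n (A : 'M[R]_n) : R :=
  sup [set r | exists v : 'cV[R]_n, normv v = 1 /\ r = normv (A *m v)].
Definition cond2 n (A : 'M[R]_n) : R := opnorm2 A * opnorm2 (invmx A).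

Definition cg_step n (A : 'M[R]_n) (s : 'cV[R]_n * 'cV[R]_n * 'cV[R]_n)
  : 'cV[R]_n * 'cV[R]_n * 'cV[R]_n :=
  let: (x, r, p) := s in
  if r == 0 then s else
  let alpha := dotv r r / dotv p (A *m p) in
  let x' := x + alpha *: p in
  let r' := r - alpha *: (A *m p) in
  let beta := dotv r' r' / dotv r r in
  (x', r', r' + beta *: p).

Definition cg_state n (A : 'M[R]_n) (y x0 : 'cV[R]_n) (j : nat) :=
  iter j (cg_step A) (x0, y - A *m x0, y - A *m x0).

Definition cg_iter n (A : 'M[R]_n) (y : 'cV[R]_n) (j : nat) : 'cV[R]_n :=
  (cg_state A y 0 j).1.1.

(* TSS-Solve estimator evaluated at realization Q = j, law p of Q *)
Definition tss n (A : 'M[R]_n) (y : 'cV[R]_n) (p : nat -> R) (imin j : nat)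
  : 'cV[R]_n :=
  (p j)^-1 *: (cg_iter A y j - cg_iter A y j.-1) + cg_iter A y imin.-1.

(* expectation / variance of a vector-valued function of Q, whose law p is
   supported on {imin, ..., imax} *)
Definition expect n (p : nat -> R) (imin imax : nat) (X : nat -> 'cV[R]_n)
  : 'cV[R]_n := \sum_(imin <= j < imax.+1) p j *: X j.
Definition variance n (p : nat -> R) (imin imax : nat) (X : nat -> 'cV[R]_n)
  : R := \sum_(imin <= j < imax.+1) p j * normv (X j - expect p imin imax X) ^+ 2.

End CGDefs.

(* Main.v *)
Require Import Defs.
From HB Require Import structures.
From mathcomp Require Import all_boot all_order all_algebra.
From mathcomp Require Import classical_sets reals.
From mathcomp Require Import ring lra.
Import Order.TTheory GRing.Theory Num.Theory.
Set Implicit Arguments. Unset Strict Implicit. Unset Printing Implicit Defensive.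
Local Open Scope ring_scope.


Section Dot.
Variable R : realType.
Variable n : nat.
Implicit Types u v w : 'cV[R]_n.

Lemma dotvE u v : dotv u v = \sum_i u i 0 * v i 0.
Proof. by rewrite /dotv !mxE; apply: eq_bigr => i _; rewrite mxE. Qed.

Lemma dotvC u v : dotv u v = dotv v u.
Proof. by rewrite !dotvE; apply: eq_bigr => i _; rewrite mulrC. Qed.

Lemma dotvDl u v w : dotv (u + v) w = dotv u w + dotv v w.
Proof. by rewrite !dotvE -big_split; apply: eq_bigr => i _; rewrite mxE mulrDl. Qed.

Lemma dotvZl (a : R) u v : dotv (a *: u) v = a * dotv u v.
Proof. by rewrite !dotvE mulr_sumr; apply: eq_bigr => i _; rewrite mxE mulrA. Qed.

Lemma dotvNl u v : dotv (- u) v = - dotv u v.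
Proof. by rewrite -scaleN1r dotvZl mulN1r. Qed.

Lemma dotvBl u v w : dotv (u - v) w = dotv u w - dotv v w.
Proof. by rewrite dotvDl dotvNl. Qed.

Lemma dotvDr u v w : dotv u (v + w) = dotv u v + dotv u w.
Proof. by rewrite dotvC dotvDl !(dotvC u). Qed.
Lemma dotvZr (a : R) u v : dotv u (a *: v) = a * dotv u v.
Proof. by rewrite dotvC dotvZl dotvC. Qed.
Lemma dotvNr u v : dotv u (- v) = - dotv u v.
Proof. by rewrite dotvC dotvNl dotvC. Qed.
Lemma dotvBr u v w : dotv u (v - w) = dotv u v - dotv u w.
Proof. by rewrite dotvDr dotvNr. Qed.
Lemma dotv0l v : dotv 0 v = 0.
Proof. by rewrite -(scale0r 0) dotvZl mul0r. Qed.
Lemma dotv0r v : dotv v 0 = 0.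
Proof. by rewrite dotvC dotv0l. Qed.

Lemma dotv_suml I (r : seq I) (P : pred I) (F : I -> 'cV[R]_n) v :
  dotv (\sum_(i <- r | P i) F i) v = \sum_(i <- r | P i) dotv (F i) v.
Proof.
exact: (big_morph (fun u => dotv u v) (fun a b => dotvDl a b v) (dotv0l v)).
Qed.

Lemma dotv_ge0 v : 0 <= dotv v v.
Proof. by rewrite dotvE; apply: sumr_ge0 => i _; rewrite -expr2 sqr_ge0. Qed.

Lemma dotv_eq0 v : dotv v v = 0 -> v = 0.
Proof.
rewrite dotvE => /eqP; rewrite psumr_eq0 => [/allP H|i _]; last by rewrite -expr2 sqr_ge0.
apply/matrixP => i j; rewrite (ord1 j) mxE.
have := H i (mem_index_enum _); rewrite -expr2 sqrf_eq0 => /eqP //.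
Qed.

Lemma dotv_gt0 v : v != 0 -> 0 < dotv v v.
Proof.
move=> nz; rewrite lt_def dotv_ge0 andbT; apply/eqP => /dotv_eq0 h.
by rewrite h eqxx in nz.
Qed.

Lemma dotv_mull (B : 'M[R]_n) u v : dotv u (B *m v) = dotv (B^T *m u) v.
Proof. by rewrite /dotv trmx_mul trmxK mulmxA. Qed.

Lemma normv_sq v : normv v ^+ 2 = dotv v v.
Proof. by rewrite /normv sqr_sqrtr // dotv_ge0. Qed.

Lemma normv_ge0 v : 0 <= normv v.
Proof. exact: sqrtr_ge0. Qed.

End Dot.


Section CS.
Variable R : realType.

Lemma discr (a b c : R) : 0 <= c ->
  (forall t, 0 <= a + 2 * b * t + c * t ^+ 2) -> b ^+ 2 <= a * c.
Proof.
move=> c0 H; have [cgt0|] := ltrP 0 c.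
  have := H (- b / c).
  have -> : a + 2 * b * (- b / c) + c * (- b / c) ^+ 2 = (a * c - b ^+ 2) / c.
    by field; rewrite gt_eqF.
  by rewrite pmulr_lge0 ?invr_gt0 // subr_ge0.
move=> cle0; have c00 : c = 0 by apply/eqP; rewrite eq_le cle0 c0.
rewrite c00 mulr0; have [b0|bn0] := eqVneq b 0; first by rewrite b0 expr0n.
have := H (- (a + 1) / (2 * b)).
have -> : a + 2 * b * (- (a + 1) / (2 * b)) + c * (- (a + 1) / (2 * b)) ^+ 2 = -1.
  by rewrite c00 mul0r addr0; field; rewrite bn0.
by rewrite ler0N1.
Qed.

Variable n : nat.
Variable B : 'M[R]_n.
Hypothesis symB : B^T = B.
Hypothesis psdB : forall v, 0 <= dotv v (B *m v).

Lemma form_sym u v : dotv u (B *m v) = dotv v (B *m u).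
Proof. by rewrite dotv_mull symB dotvC. Qed.

Lemma form_CS u v : dotv u (B *m v) ^+ 2 <= dotv u (B *m u) * dotv v (B *m v).
Proof.
apply: discr => // t; have := psdB (u + t *: v).
rewrite mulmxDr -scalemxAr dotvDl !dotvDr !dotvZl !dotvZr (form_sym v u).
by move=> h; lra.
Qed.

End CS.


Section Opnorm.
Local Open Scope classical_set_scope.
Variable R : realType.
Variable n : nat.
Implicit Types u v w : 'cV[R]_n.

Lemma normvZ (a : R) v : normv (a *: v) = `|a| * normv v.
Proof.
by rewrite /normv dotvZl dotvZr mulrA -expr2 sqrtrM ?sqr_ge0 // sqrtr_sqr.
Qed.

Lemma normv0 : normv (0 : 'cV[R]_n) = 0.
Proof. by rewrite /normv dotv0l sqrtr0. Qed.

Lemma coord_le v i : (v i 0) ^+ 2 <= dotv v v.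
Proof.
rewrite dotvE (bigD1 i) //= -expr2 lerDl.
by apply: sumr_ge0 => j _; rewrite -expr2 sqr_ge0.
Qed.

Variable A : 'M[R]_n.

Definition Kbound : R := \sum_i (\sum_j `|A i j|) ^+ 2.

Lemma unit_bound v : normv v = 1 -> normv (A *m v) <= Num.sqrt Kbound.
Proof.
move=> v1; rewrite /normv ler_sqrt; last by apply: sumr_ge0 => i _; rewrite sqr_ge0.
have dv : dotv v v = 1 by rewrite -normv_sq v1 expr1n.
rewrite dotvE /Kbound; apply: ler_sum => i _; rewrite -expr2.
have vj j : `|v j 0| <= 1.
  have := coord_le v j; rewrite dv -real_normK ?num_real // => h.
  have := normr_ge0 (v j 0); nra.
rewrite -real_normK ?num_real // ler_pXn2r ?nnegrE ?normr_ge0 //; last first.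
  by apply: sumr_ge0 => j _; rewrite normr_ge0.
rewrite mxE; apply: le_trans (ler_norm_sum _ _ _) _; apply: ler_sum => j _.
by rewrite normrM ler_piMr ?normr_ge0.
Qed.

Lemma opnorm_ub : ubound [set r | exists v : 'cV[R]_n, normv v = 1 /\ r = normv (A *m v)] (opnorm2 A).
Proof.
apply: ub_le_sup; exists (Num.sqrt Kbound) => r [v [v1 ->]].
exact: unit_bound.
Qed.

Lemma opnorm_le v : normv (A *m v) <= opnorm2 A * normv v.
Proof.
have [->|vn0] := eqVneq v 0; first by rewrite mulmx0 normv0 mulr0.
have t0 : 0 < normv v by rewrite /normv sqrtr_gt0 dotv_gt0.
set u := (normv v)^-1 *: v.
have u1 : normv u = 1 by rewrite normvZ ger0_norm ?invr_ge0 ?ltW // mulVf ?gt_eqF.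
have : normv (A *m u) <= opnorm2 A by apply: opnorm_ub; exists u.
rewrite /u -scalemxAr normvZ ger0_norm; last by rewrite invr_ge0 normv_ge0.
by rewrite mulrC ler_pdivrMr.
Qed.

Lemma opnorm_le2 v : dotv (A *m v) (A *m v) <= opnorm2 A ^+ 2 * dotv v v.
Proof.
rewrite -!normv_sq -exprMn ler_pXn2r ?nnegrE ?normv_ge0 ?opnorm_le //.
apply: le_trans (opnorm_le v); exact: normv_ge0.
Qed.

End Opnorm.


Section SPD.
Variable R : realType.

Lemma sq_le (x y : R) : 0 <= y -> x ^+ 2 <= y ^+ 2 -> x <= y.
Proof. move=> y0 h; nra. Qed.

Lemma sq_cancel (s c : R) : 0 <= s -> 0 <= c -> s ^+ 2 <= c * s -> s <= c.
Proof. move=> s0 c0 h; nra. Qed.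

Variable n : nat.
Implicit Types u v w : 'cV[R]_n.+1.

Lemma euclid_CS u v : dotv u v ^+ 2 <= dotv u u * dotv v v.
Proof.
have := @form_CS R n.+1 1%:M (trmx1 _ _) _ u v; rewrite !mul1mx; apply.
by move=> w; rewrite mul1mx dotv_ge0.
Qed.

Lemma opnorm_ge0 (B : 'M[R]_n.+1) : 0 <= opnorm2 B.
Proof.
set e := const_mx 1 : 'cV[R]_n.+1.
have en0 : e != 0 by apply/eqP => /matrixP /(_ ord0 ord0); rewrite !mxE; apply/eqP; exact: oner_neq0.
have t0 : 0 < normv e by rewrite /normv sqrtr_gt0 dotv_gt0.
have h2 := opnorm_le B e; have h1 := normv_ge0 (B *m e).
have := le_trans h1 h2; rewrite pmulr_lge0 //.
Qed.

Variable A : 'M[R]_n.+1.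
Hypothesis symA : A^T = A.
Hypothesis posA : forall v, v != 0 -> 0 < dotv v (A *m v).

Lemma psdA v : 0 <= dotv v (A *m v).
Proof. by have [->|/posA/ltW//] := eqVneq v 0; rewrite dotv0l. Qed.

Lemma unitA : A \in unitmx.
Proof.
rewrite -row_free_unit; apply: inj_row_free => v vA.
have h : A *m v^T = 0 by rewrite -symA -trmx_mul vA trmx0.
apply/eqP; rewrite -trmx_eq0; apply/eqP/dotv_eq0.
apply/eqP; rewrite eq_le; apply/andP; split; last exact: dotv_ge0.
have [->|vn0] := eqVneq v^T 0; first by rewrite dotv0l.
by have := posA vn0; rewrite h dotv0r ltxx.
Qed.

Local Notation L := (opnorm2 A).
Local Notation N := (opnorm2 (invmx A)).
Local Notation a w := (dotv w (A *m w)).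

Lemma AAw w : dotv (A *m w) (A *m w) = dotv w (A *m (A *m w)).
Proof. by rewrite dotvC dotv_mull symA. Qed.

Lemma P4 w : a w <= L * dotv w w.
Proof.
apply: sq_le; first by rewrite mulr_ge0 ?opnorm_ge0 ?dotv_ge0.
apply: le_trans (euclid_CS _ _) _.
have := opnorm_le2 A w; have := dotv_ge0 w; rewrite exprMn; nra.
Qed.

Lemma P1 w : a w <= N * dotv (A *m w) (A *m w).
Proof.
set u := A *m w.
have wE : w = invmx A *m u by rewrite /u mulKmx ?unitA.
rewrite {1}wE -/u dotvC; apply: sq_le.
  by rewrite mulr_ge0 ?opnorm_ge0 ?dotv_ge0.
apply: le_trans (euclid_CS _ _) _.
have := opnorm_le2 (invmx A) u; have := dotv_ge0 u; rewrite exprMn; nra.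
Qed.

Lemma aE_ge0 w : 0 <= a w. Proof. exact: psdA. Qed.

Lemma P2 w : dotv (A *m w) (A *m w) <= L * a w.
Proof.
set s := dotv (A *m w) (A *m w).
have s0 : 0 <= s by exact: dotv_ge0.
have aAw : a (A *m w) <= L * s.
  apply: sq_le; first by rewrite mulr_ge0 ?opnorm_ge0.
  apply: le_trans (euclid_CS _ _) _.
  have := opnorm_le2 A (A *m w); rewrite exprMn -/s; nra.
apply: sq_cancel => //; first by rewrite mulr_ge0 ?opnorm_ge0 ?psdA.
have h := @form_CS R n.+1 A symA psdA w (A *m w).
rewrite /s AAw; apply: le_trans h _; rewrite -AAw -/s.
have := psdA w; nra.
Qed.

Lemma P3 w : dotv w w <= N * a w.
Proof.
set t := dotv w w; set z := invmx A *m w.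
have Az : A *m z = w by rewrite /z mulKVmx ?unitA.
have az : a z <= N * t.
  rewrite Az dotvC; apply: sq_le; first by rewrite mulr_ge0 ?opnorm_ge0 ?dotv_ge0.
  apply: le_trans (euclid_CS _ _) _.
  have := opnorm_le2 (invmx A) w; have := dotv_ge0 w; rewrite exprMn -/t; nra.
apply: sq_cancel; first exact: dotv_ge0; first by rewrite mulr_ge0 ?opnorm_ge0 ?psdA.
have h := @form_CS R n.+1 A symA psdA w z.
rewrite Az -/t in h; apply: le_trans h _.
rewrite Az in az; have := psdA w; nra.
Qed.

End SPD.


Section Polar.
Variable R : realType.

Lemma polar_real (a b c : R) : 0 <= a -> 0 <= b -> 0 <= c ->
  (forall t, 4 * t * b <= 2 * c * (a + t ^+ 2 * b)) -> b <= c ^+ 2 * a.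
Proof.
move=> a0 b0 c0 H; have [cgt0|] := ltrP 0 c.
  have := H c^-1.
  have -> : 2 * c * (a + c^-1 ^+ 2 * b) = 2 * c * a + 2 * b / c.
    by field; rewrite gt_eqF.
  move=> h.
  have h2 : 2 * b / c <= 2 * c * a by rewrite -mulrA; move: h; rewrite !mulrA; lra.
  have : 2 * b <= 2 * c * a * c by rewrite -ler_pdivrMr.
  nra.
move=> cle0; have c00 : c = 0 by apply/eqP; rewrite eq_le cle0 c0.
have := H 1; rewrite c00; nra.
Qed.

Variable n : nat.
Variable A : 'M[R]_n.+1.
Hypothesis symA : A^T = A.

Local Notation ha := (horner_mx A).

Lemma ha_comm p : ha p *m A = A *m ha p.
Proof.
have := @comm_horner_mx R n A A p erefl.
by rewrite /comm_mx.
Qed.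

Lemma ha_tr p : (ha p)^T = ha p.
Proof.
elim/poly_ind: p => [|p c IH]; first by rewrite rmorph0 trmx0.
rewrite rmorphD rmorphM /= horner_mx_X horner_mx_C linearD /= tr_scalar_mx.
by rewrite -mulmxE trmx_mul IH symA ha_comm.
Qed.

Lemma ha_self p u v : dotv (ha p *m u) (A *m v) = dotv u (A *m (ha p *m v)).
Proof.
by rewrite [LHS]dotvC [LHS]dotv_mull ha_tr mulmxA ha_comm -mulmxA dotvC.
Qed.

Lemma formA_sym u v : dotv u (A *m v) = dotv v (A *m u).
Proof. by rewrite dotv_mull symA dotvC. Qed.

Hypothesis psdA : forall v, 0 <= dotv v (A *m v).

Lemma F4 p (c : R) : 0 <= c ->
  (forall w, `|dotv (ha p *m w) (A *m w)| <= c * dotv w (A *m w)) ->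
  forall x, dotv (ha p *m x) (A *m (ha p *m x)) <= c ^+ 2 * dotv x (A *m x).
Proof.
move=> c0 H x; set P := ha p.
apply: polar_real; [exact: psdA|exact: psdA|exact: c0|move=> t].
set y := t *: (P *m x).
have e1 := H (x + y); have e2 := H (x - y).
have ey : dotv (P *m x) (A *m y) = t * dotv (P *m x) (A *m (P *m x)).
  by rewrite /y -scalemxAr dotvZr.
have eyy : dotv y (A *m y) = t ^+ 2 * dotv (P *m x) (A *m (P *m x)).
  by rewrite /y -!scalemxAr dotvZr dotvZl mulrA -expr2.
have sP : dotv (P *m y) (A *m x) = dotv (P *m x) (A *m y).
  by rewrite ha_self formA_sym.
move: e1 e2; rewrite !ler_norml => /andP[_ e1] /andP[e2 _].
rewrite !(mulmxDr, mulmxN, dotvDl, dotvDr, dotvNl, dotvNr) in e1 e2.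
rewrite sP (formA_sym y x) ey eyy in e1 e2.
lra.
Qed.
End Polar.


Section Cheb.
Variable T : comNzRingType.

Definition cheb_step (m c2 : T) (hg : T * T) : T * T :=
  (m * hg.1 + (m ^+ 2 - c2) * hg.2, hg.1 + m * hg.2).

Definition cheb (m c2 : T) (k : nat) : T * T := iter k (cheb_step m c2) (1, 0).

Lemma cheb_pell m c2 k :
  (cheb m c2 k).1 ^+ 2 + (c2 - m ^+ 2) * (cheb m c2 k).2 ^+ 2 = c2 ^+ k.
Proof.
elim: k => [|k IH] /=; first by rewrite expr1n expr0n /= mulr0 addr0.
rewrite /cheb /= -/(cheb m c2 k) /cheb_step /= [c2 ^+ k.+1]exprS -IH.
ring.
Qed.

End Cheb.

Lemma cheb_morph (T S : comNzRingType) (f : {rmorphism T -> S}) m c2 k :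
  f (cheb m c2 k).1 = (cheb (f m) (f c2) k).1 /\
  f (cheb m c2 k).2 = (cheb (f m) (f c2) k).2.
Proof.
elim: k => [|k [IH1 IH2]] /=; first by rewrite rmorph1 rmorph0.
rewrite /cheb /= -/(cheb m c2 k) -/(cheb (f m) (f c2) k) /cheb_step /=.
by rewrite !rmorphD !rmorphM rmorphB rmorphXn IH1 IH2.
Qed.

Section ChebReal.
Variable R : realType.

Lemma cheb_scalar (s : R) k :
  let m0 := s ^+ 2 + 1 in let c2 := (s ^+ 2 - 1) ^+ 2 in
  (cheb m0 c2 k).1 + 2 * s * (cheb m0 c2 k).2 = ((s + 1) ^+ 2) ^+ k /\
  (cheb m0 c2 k).1 - 2 * s * (cheb m0 c2 k).2 = ((s - 1) ^+ 2) ^+ k.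
Proof.
move=> m0 c2; elim: k => [|k [IH1 IH2]] /=.
  by rewrite !expr0 mulr0 subr0 addr0.
rewrite /cheb /= -/(cheb m0 c2 k) /cheb_step /= (exprS ((s + 1) ^+ 2)) (exprS ((s - 1) ^+ 2)) -IH1 -IH2 /m0 /c2.
by split; ring.
Qed.

Lemma cheb_scalar_lb (s : R) k : 1 <= s ->
  ((s + 1) ^+ 2) ^+ k / 2 <= (cheb (s ^+ 2 + 1) ((s ^+ 2 - 1) ^+ 2) k).1.
Proof.
move=> s1; have [h1 h2] := cheb_scalar s k.
have : 0 <= ((s - 1) ^+ 2) ^+ k by rewrite exprn_ge0 // sqr_ge0.
move: h1 h2; set H := (cheb _ _ k).1; set G := (cheb _ _ k).2.
set X := ((s + 1) ^+ 2) ^+ k; set Y := ((s - 1) ^+ 2) ^+ k => h1 h2 hY.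
have -> : H = (X + Y) / 2 by rewrite -h1 -h2; field.
lra.
Qed.

End ChebReal.


Section ChebMx.
Variable R : realType.
Variable n : nat.
Variable A : 'M[R]_n.+1.
Hypothesis symA : A^T = A.
Hypothesis posA : forall v, v != 0 -> 0 < dotv v (A *m v).

Local Notation L := (opnorm2 A).
Local Notation N := (opnorm2 (invmx A)).
Local Notation a w := (dotv w (A *m w)).
Local Notation ha := (horner_mx A).
Local Notation kap := (L * N).

Lemma kappa_ge1 : 1 <= kap.
Proof.
set e := const_mx 1 : 'cV[R]_n.+1.
have en0 : e != 0 by apply/eqP => /matrixP /(_ ord0 ord0); rewrite !mxE; apply/eqP; exact: oner_neq0.
have a0 := posA en0.
have h1 := P1 symA posA e; have h2 := P2 symA posA e.
have N0 := opnorm_ge0 (invmx A).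
have : N * dotv (A *m e) (A *m e) <= N * (L * a e) by rewrite ler_wpM2l.
nra.
Qed.

Definition mpol : {poly R} := (kap + 1)%:P - (2 * N) *: 'X.

Lemma ha_mpol : ha mpol = (kap + 1)%:M - (2 * N) *: A.
Proof. by rewrite rmorphB /= horner_mx_C linearZ /= horner_mx_X. Qed.

Lemma M_bound w : `|dotv (ha mpol *m w) (A *m w)| <= (kap - 1) * a w.
Proof.
rewrite ha_mpol mulmxBl mul_scalar_mx -scalemxAl dotvBl !dotvZl.
have h1 := P1 symA posA w; have h2 := P2 symA posA w.
have N0 := opnorm_ge0 (invmx A).
have : N * dotv (A *m w) (A *m w) <= N * (L * a w) by rewrite ler_wpM2l.
rewrite ler_norml; move=> h3; apply/andP; split; nra.
Qed.

Lemma MM_bound w : a (ha mpol *m w) <= (kap - 1) ^+ 2 * a w.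
Proof.
apply: F4 => //; first exact: psdA.
  by rewrite subr_ge0 kappa_ge1.
exact: M_bound.
Qed.

Definition chebH k : {poly R} := (cheb mpol (((kap - 1) ^+ 2)%:P) k).1.
Definition chebG k : {poly R} := (cheb mpol (((kap - 1) ^+ 2)%:P) k).2.

Lemma cheb_mx_bound k w : a (ha (chebH k) *m w) <= ((kap - 1) ^+ 2) ^+ k * a w.
Proof.
set c2 := (kap - 1) ^+ 2.
have pell := cheb_pell mpol (c2%:P) k.
rewrite -/(chebH k) -/(chebG k) in pell.
have HH : chebH k * chebH k = (c2 ^+ k)%:P - chebG k * ((c2%:P - mpol ^+ 2) * chebG k).
  by rewrite (rmorphXn polyC) -pell; ring.
rewrite ha_self // mulmxA mulmxE -rmorphM /= HH rmorphB /= horner_mx_C.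
rewrite mulmxBl mul_scalar_mx mulmxBr -scalemxAr dotvBr dotvZr.
rewrite rmorphM /= -mulmxE -mulmxA -ha_self //.
set v := ha (chebG k) *m w.
rewrite rmorphM /= -mulmxE -mulmxA -/v.
rewrite rmorphB /= horner_mx_C [ha (mpol ^+ 2)]rmorphXn /=.
rewrite mulmxBl mul_scalar_mx mulmxBr -scalemxAr.
rewrite dotvBr dotvZr expr2 -mulmxE -mulmxA -(ha_self symA mpol v).
have := MM_bound v; rewrite -/c2; lra.
Qed.

End ChebMx.


Section Sizes.
Variable R : realType.
Implicit Types p q : {poly R}.

Lemma sizeD_le p q k : (size p <= k)%N -> (size q <= k)%N -> (size (p + q)%R <= k)%N.
Proof. by move=> hp hq; apply: leq_trans (size_polyD _ _) _; rewrite geq_max hp hq. Qed.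

Lemma sizeZ_le (c : R) p k : (size p <= k)%N -> (size (c *: p)%R <= k)%N.
Proof. by move=> hp; apply: leq_trans (size_scale_leq _ _) hp. Qed.

Lemma sizeN_le p k : (size p <= k)%N -> (size (- p)%R <= k)%N.
Proof. by rewrite size_polyN. Qed.

Lemma sizeB_le p q k : (size p <= k)%N -> (size q <= k)%N -> (size (p - q)%R <= k)%N.
Proof. by move=> hp hq; apply: sizeD_le => //; apply: sizeN_le. Qed.

Lemma sizeXM_le p k : (size p <= k)%N -> (size ('X * p)%R <= k.+1)%N.
Proof.
move=> /leq_sizeP hp; apply/leq_sizeP => j hj; rewrite coefXM.
case: j hj => [//|j] hj /=; exact: hp.
Qed.

Lemma sizeCM_le (c : R) p k : (size p <= k)%N -> (size (c%:P * p)%R <= k)%N.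
Proof. by rewrite mul_polyC; apply: sizeZ_le. Qed.

Lemma size_le_mono p k k' : (k <= k')%N -> (size p <= k)%N -> (size p <= k')%N.
Proof. by move=> kk hp; apply: leq_trans hp kk. Qed.

End Sizes.

Section Krylov.
Variable R : realType.
Variable n : nat.
Variable A : 'M[R]_n.+1.
Hypothesis symA : A^T = A.
Hypothesis posA : forall v, v != 0 -> 0 < dotv v (A *m v).
Variable y : 'cV[R]_n.+1.

Local Notation ha := (horner_mx A).

Definition inK k (v : 'cV[R]_n.+1) := exists s : {poly R}, (size s <= k)%N /\ v = ha s *m y.

Lemma inK0 k : inK k 0.
Proof. by exists 0; rewrite size_poly0 rmorph0 mul0mx. Qed.

Lemma inK_le k k' v : (k <= k')%N -> inK k v -> inK k' v.
Proof. by move=> kk [s [hs ->]]; exists s; split => //; apply: leq_trans hs kk. Qed.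

Lemma inKD k u v : inK k u -> inK k v -> inK k (u + v).
Proof.
move=> [s [hs ->]] [t [ht ->]]; exists (s + t); split; first exact: sizeD_le.
by rewrite rmorphD mulmxDl.
Qed.

Lemma inKZ k (c : R) v : inK k v -> inK k (c *: v).
Proof.
move=> [s [hs ->]]; exists (c *: s); split; first exact: sizeZ_le.
by rewrite linearZ /= scalemxAl.
Qed.

Lemma inKN k v : inK k v -> inK k (- v).
Proof. by move=> h; rewrite -scaleN1r; apply: inKZ. Qed.

Lemma inKB k u v : inK k u -> inK k v -> inK k (u - v).
Proof. by move=> hu hv; apply: inKD => //; apply: inKN. Qed.

Lemma inKA k v : inK k v -> inK k.+1 (A *m v).
Proof.
move=> [s [hs ->]]; exists ('X * s); split; first exact: sizeXM_le.
by rewrite rmorphM /= horner_mx_X -mulmxE mulmxA.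
Qed.

Lemma inKy k : (0 < k)%N -> inK k y.
Proof.
move=> k0; exists 1; split; first by rewrite size_poly1.
by rewrite rmorph1 mul1mx.
Qed.

Lemma inK0_eq v : inK 0 v -> v = 0.
Proof. by move=> [s [hs ->]]; move: hs; rewrite leqn0 size_poly_eq0 => /eqP ->; rewrite rmorph0 mul0mx. Qed.

Definition orthK k (r : 'cV[R]_n.+1) := forall v, inK k v -> dotv r v = 0.

Lemma decompK k r v : inK k.+1 r -> orthK k r -> r != 0 -> inK k.+1 v ->
  exists c w, inK k w /\ v = c *: r + w.
Proof.
move=> [t [ht rE]] hor rn0 [s [hs vE]].
have [tk0|tkn0] := eqVneq t`_k 0.
  have : inK k r.
    exists t; split => //; apply/leq_sizeP => j; rewrite leq_eqVlt => /orP[/eqP <-//|].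
    by move/leq_sizeP: ht; apply.
  move/hor => /dotv_eq0 r0; by rewrite r0 eqxx in rn0.
exists (s`_k / t`_k), (ha (s - (s`_k / t`_k) *: t) *m y); split.
  exists (s - (s`_k / t`_k) *: t); split => //.
  apply/leq_sizeP => j; rewrite leq_eqVlt => /orP[/eqP <-|hj].
    by rewrite coefB coefZ divfK // subrr.
  rewrite coefB coefZ; move/leq_sizeP: hs => /(_ j hj) ->; move/leq_sizeP: ht => /(_ j hj) ->.
  by rewrite mulr0 subrr.
have E : ha (s - (s`_k / t`_k) *: t) = ha s - (s`_k / t`_k) *: ha t.
  by rewrite rmorphB /= horner_mxZ.
by rewrite E rE vE mulmxBl -scalemxAl addrC subrK.
Qed.

Definition Inv k (x r p : 'cV[R]_n.+1) :=
  [/\ inK k x, r = y - A *m x, inK k (p - r), orthK k r &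
      (forall v, inK k v -> dotv (A *m p) v = 0) /\ (r = 0 -> p = 0)].

Lemma dotA u v : dotv (A *m u) v = dotv u (A *m v).
Proof. by rewrite dotv_mull symA. Qed.

Lemma Inv0 : Inv 0 0 (y - A *m 0) (y - A *m 0).
Proof.
split => //; first exact: inK0.
- by rewrite subrr; apply: inK0.
- by move=> v /inK0_eq ->; rewrite dotv0r.
- by split => // v /inK0_eq ->; rewrite dotv0r.
Qed.

Lemma Inv_step k x r p : Inv k x r p ->
  let s' := cg_step A (x, r, p) in Inv k.+1 s'.1.1 s'.1.2 s'.2.
Proof.
case=> hx hr hpr hor [hAp hf] /=.
have [r0|rn0] := eqVneq r 0.
  have p0 := hf r0; rewrite /= p0 r0.
  split; [exact: inK_le hx | by rewrite -r0 | by rewrite subrr; apply: inK0 |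
    by move=> v _; rewrite dotv0l | by split => // v _; rewrite mulmx0 dotv0l].
rewrite /=.
set rr := dotv r r; set pAp := dotv p (A *m p).
have rr0 : 0 < rr by exact: dotv_gt0.
have rp : dotv r p = rr.
  by rewrite -(subrK r p) dotvDr (hor _ hpr) add0r.
have pn0 : p != 0 by apply/eqP => p0; move: rp; rewrite p0 dotv0r => h; move: rr0; rewrite -h ltxx.
have pAp0 : 0 < pAp by exact: posA.
set alpha := rr / pAp.
set r' := r - alpha *: (A *m p).
set beta := dotv r' r' / rr.
have rK : inK k.+1 r.
  by rewrite hr; apply: inKB; [apply: inKy|apply: inKA].
have pK : inK k.+1 p.
  by rewrite -(subrK r p); apply: inKD => //; apply: inK_le hpr.
have Apr : dotv (A *m p) r = pAp.
  have -> : dotv (A *m p) r = dotv (A *m p) p - dotv (A *m p) (p - r).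
    by rewrite dotvBr opprB addrC subrK.
  by rewrite (hAp _ hpr) subr0 dotA.
have r'w w : inK k w -> dotv r' w = 0.
  by move=> hw; rewrite /r' dotvBl dotvZl (hor _ hw) (hAp _ hw) mulr0 subrr.
have r'r : dotv r' r = 0.
  by rewrite /r' dotvBl dotvZl Apr /alpha divfK ?gt_eqF // subrr.
have or' : orthK k.+1 r'.
  move=> v hv; have [c [w [hw ->]]] := decompK rK hor rn0 hv.
  by rewrite dotvDr dotvZr r'r (r'w _ hw) mulr0 addr0.
split.
- by apply: inKD; [apply: inK_le hx|apply: inKZ].
- by rewrite /r' {1}hr mulmxDr -scalemxAr opprD addrA.
- by rewrite addrC addKr; apply: inKZ.
- exact: or'.
split.
- move=> v hv; have [c [w [hw ->]]] := decompK rK hor rn0 hv.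
  rewrite mulmxDr -scalemxAr !dotvDl !dotvDr !dotvZl !dotvZr.
  rewrite [dotv (A *m r') w]dotA (or' _ (inKA hw)) (hAp _ hw) Apr.
  have -> : dotv (A *m r') r = dotv r' (A *m r) by rewrite dotA.
  have -> : A *m r = A *m p - A *m (p - r) by rewrite mulmxBr opprB addrC subrK.
  rewrite dotvBr (or' _ (inKA hpr)) subr0.
  have ar'Ap : alpha * dotv r' (A *m p) = - dotv r' r'.
    rewrite -dotvZr.
    have -> : alpha *: (A *m p) = r - r' by rewrite /r' opprB addrC subrK.
    by rewrite dotvBr r'r sub0r.
  have al0 : alpha != 0 by rewrite /alpha mulf_neq0 ?invr_eq0 ?gt_eqF.
  have -> : dotv r' (A *m p) = - dotv r' r' / alpha.
    by rewrite -ar'Ap mulrAC mulfV // mul1r.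
  rewrite /beta /alpha; field.
  by rewrite !gt_eqF.
- by move=> r'0; rewrite /beta r'0 dotv0l mul0r scale0r addr0.
Qed.

End Krylov.


Section CGErr.
Variable R : realType.
Variable n : nat.
Variable A : 'M[R]_n.+1.
Hypothesis symA : A^T = A.
Hypothesis posA : forall v, v != 0 -> 0 < dotv v (A *m v).
Variable y : 'cV[R]_n.+1.

Local Notation L := (opnorm2 A).
Local Notation N := (opnorm2 (invmx A)).
Local Notation a w := (dotv w (A *m w)).
Local Notation ha := (horner_mx A).
Local Notation kap := (L * N).
Local Notation xs := (invmx A *m y).

Lemma Inv_state k : let s := cg_state A y 0 k in Inv A y k s.1.1 s.1.2 s.2.
Proof.
elim: k => [|k IH]; first exact: Inv0.
have -> : cg_state A y 0 k.+1 = cg_step A (cg_state A y 0 k) by [].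
move: IH; case: (cg_state A y 0 k) => [[x r] p] IH /=.
exact: (Inv_step symA posA IH).
Qed.

Lemma cg_opt k z : inK A y k z -> a (xs - cg_iter A y k) <= a (xs - z).
Proof.
move=> hz; have := Inv_state k; rewrite /cg_iter.
case: (cg_state A y 0 k) => [[x r] p] /= [hx hr hpr hor _].
have Ae : A *m (xs - x) = r by rewrite mulmxBr mulKVmx ?unitA // hr.
have -> : xs - z = (xs - x) + (x - z) by rewrite addrA subrK.
have hw : dotv (x - z) r = 0 by rewrite dotvC; apply: hor; apply: inKB.
move: Ae hw; move: (xs - x) (x - z) => e w Ae hw.
rewrite mulmxDr !dotvDl !dotvDr Ae hw.
have -> : dotv e (A *m w) = dotv w (A *m e) by rewrite formA_sym.
rewrite Ae hw; have := psdA posA w; lra.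
Qed.

Lemma mpol_size (P : {poly R}) j : (size P <= j)%N -> (size (mpol A * P)%R <= j.+1)%N.
Proof.
move=> hP; rewrite /mpol mulrBl -scalerAl.
apply: sizeB_le; first by apply: size_le_mono (leqnSn _) _; apply: sizeCM_le.
by apply: sizeZ_le; apply: sizeXM_le.
Qed.

Lemma cheb_size k : (size (chebH A k) <= k.+1)%N /\ (size (chebG A k) <= k)%N.
Proof.
rewrite /chebH /chebG; elim: k => [|k [IH1 IH2]] /=.
  by rewrite size_poly1 size_poly0.
rewrite /cheb /= -/(cheb (mpol A) _ k) /cheb_step /=.
set c2 := ((kap - 1) ^+ 2)%:P.
set H := (cheb (mpol A) c2 k).1; set G := (cheb (mpol A) c2 k).2.
split; last first.
  by apply: sizeD_le; [apply: size_le_mono IH1|apply: mpol_size].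
have -> : mpol A * H + (mpol A ^+ 2 - c2) * G = mpol A * H + mpol A * (mpol A * G) - c2 * G.
  by ring.
apply: sizeB_le; last by rewrite /c2; apply: sizeCM_le; apply: size_le_mono IH2; apply: leq_trans (leqnSn _) (leqnSn _).
apply: sizeD_le; first by apply: mpol_size.
by apply: mpol_size; apply: mpol_size.
Qed.

Lemma chebH0 k : (chebH A k).[0] = (cheb (kap + 1) ((kap - 1) ^+ 2) k).1.
Proof.
have [h _] := cheb_morph (horner_eval (0 : R)) (mpol A) (((kap - 1) ^+ 2)%:P) k.
rewrite /chebH -horner_evalE h; congr (cheb _ _ k).1.
  change ((mpol A).[0] = kap + 1); rewrite /mpol !hornerE.
  by rewrite subr0.
by change ((((kap - 1) ^+ 2)%:P).[0] = (kap - 1) ^+ 2); rewrite hornerC.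
Qed.

Definition rho : R := (Num.sqrt kap - 1) / (Num.sqrt kap + 1).

Lemma cg_errA k : a (xs - cg_iter A y k) <= 4 * (rho ^+ 2) ^+ k * a xs.
Proof.
set s := Num.sqrt kap.
have k1 := kappa_ge1 symA posA.
have s1 : 1 <= s by rewrite -sqrtr1 ler_sqrt // ltW // (lt_le_trans ltr01).
have kE : kap = s ^+ 2 by rewrite sqr_sqrtr // (le_trans ler01).
set H := chebH A k; set H0 := H.[0].
have H0lb : ((s + 1) ^+ 2) ^+ k / 2 <= H0.
  rewrite /H0 /H chebH0 kE.
  have -> : s ^+ 2 - 1 = s ^+ 2 - 1 by [].
  exact: cheb_scalar_lb.
have X0 : 0 < ((s + 1) ^+ 2) ^+ k by rewrite exprn_gt0 // exprn_gt0 //; lra.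
have H0p : 0 < H0 by apply: lt_le_trans H0lb; rewrite divr_gt0.
set u := 1 - H0^-1 *: H.
have u0 : u`_0 = 0 by rewrite -horner_coef0 /u !hornerE -/H0 mulVf ?gt_eqF // subrr.
have [sH _] := cheb_size k.
have usz : (size u <= k.+1)%N.
  apply: sizeB_le; first by rewrite size_poly1.
  exact: sizeZ_le.
set sp := \poly_(i < k) u`_i.+1.
have Xsp : 'X * sp = u.
  apply/polyP => j; rewrite coefXM; case: j => [|j] /=; first by rewrite u0.
  rewrite coef_poly; case: ifP => // /negbT; rewrite -leqNgt => hj.
  by move/leq_sizeP: usz => /(_ j.+1 hj).
have zK : inK A y k (ha sp *m y).
  by exists sp; split => //; apply: size_poly.
have := cg_opt zK.
have -> : xs - ha sp *m y = H0^-1 *: (ha H *m xs).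
  have -> : ha sp *m y = ha u *m xs.
    by rewrite -Xsp rmorphM /= horner_mx_X -mulmxE -ha_comm // -mulmxA mulKVmx ?unitA.
  rewrite /u rmorphB /= rmorph1 horner_mxZ mulmxBl mul1mx -scalemxAl.
  by rewrite opprB addrC subrK.
move=> h; apply: le_trans h _.
rewrite -scalemxAr dotvZl dotvZr mulrA.
have hb := cheb_mx_bound symA posA k xs; rewrite -/H in hb.
have a0 := psdA posA xs.
have i0 : 0 <= H0^-1 * H0^-1 by rewrite mulr_ge0 // invr_ge0 ltW.
apply: le_trans (ler_wpM2l i0 hb) _.
rewrite mulrA ler_wpM2r //.
have c2E : (kap - 1) ^+ 2 = (s + 1) ^+ 2 * (s - 1) ^+ 2 by rewrite kE; ring.
rewrite c2E exprMn /rho -/s expr_div_n expr_div_n.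
set X := ((s + 1) ^+ 2) ^+ k; set Y := ((s - 1) ^+ 2) ^+ k.
have Y0 : 0 <= Y by rewrite exprn_ge0 // sqr_ge0.
have iH : H0^-1 <= 2 / X.
  rewrite -(invrK (2 / X)) lef_pV2 ?posrE ?invr_gt0 ?divr_gt0 //.
  by rewrite invf_div.
have iH0 : 0 <= H0^-1 by rewrite invr_ge0 ltW.
have h : H0^-1 / H0 <= (2 / X) * (2 / X) by apply: ler_pM.
apply: le_trans (ler_wpM2r (mulr_ge0 (ltW X0) Y0) h) _.
have Xn0 : X != 0 by rewrite gt_eqF.
move: Xn0 X0; rewrite /X; move: ((s + 1) ^+ 2 ^+ k) => Z Zn0 Z0.
rewrite le_eqVlt; apply/orP; left; apply/eqP; field.
exact: Zn0.
Qed.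

End CGErr.


Section Final.
Variable R : realType.
Variable n : nat.
Variable A : 'M[R]_n.+1.
Hypothesis symA : A^T = A.
Hypothesis posA : forall v, v != 0 -> 0 < dotv v (A *m v).
Variable y : 'cV[R]_n.+1.

Local Notation L := (opnorm2 A).
Local Notation N := (opnorm2 (invmx A)).
Local Notation a w := (dotv w (A *m w)).
Local Notation kap := (L * N).
Local Notation xs := (invmx A *m y).
Local Notation f := (cg_iter A y).

Lemma rho_ge0 : 0 <= rho A.
Proof.
have k1 := kappa_ge1 symA posA.
have s1 : 1 <= Num.sqrt kap by rewrite -sqrtr1 ler_sqrt // ltW // (lt_le_trans ltr01).
by rewrite /rho divr_ge0 //; lra.
Qed.

Lemma rho_le1 : rho A ^+ 2 <= 1.
Proof.
have k1 := kappa_ge1 symA posA.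
have s1 : 1 <= Num.sqrt kap by rewrite -sqrtr1 ler_sqrt // ltW // (lt_le_trans ltr01).
have r0 := rho_ge0.
have : rho A <= 1 by rewrite /rho ler_pdivrMr; lra.
move=> h; nra.
Qed.

Lemma cg_err2 k : dotv (xs - f k) (xs - f k) <= 4 * kap * (rho A ^+ 2) ^+ k * dotv xs xs.
Proof.
have h1 := P3 symA posA (xs - f k).
have h2 := cg_errA symA posA y k.
have h3 := P4 A xs.
have N0 := opnorm_ge0 (invmx A).
have r0 : 0 <= (rho A ^+ 2) ^+ k by rewrite exprn_ge0 // sqr_ge0.
apply: le_trans h1 _.
have := ler_wpM2l N0 h2 => h4; apply: le_trans h4 _.
have four : (0:R) <= 4 by lra.
have := ler_wpM2l (mulr_ge0 (mulr_ge0 N0 four) r0) h3.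
move=> h5; nra.
Qed.

Lemma dotv_par (u v : 'cV[R]_n.+1) : dotv (u - v) (u - v) <= 2 * dotv u u + 2 * dotv v v.
Proof.
have := dotv_ge0 (u + v).
rewrite !(dotvDl, dotvDr, dotvNl, dotvNr) (dotvC v u); lra.
Qed.

Lemma dj_bound j : (1 <= j)%N ->
  dotv (f j - f j.-1) (f j - f j.-1) <= 16 * kap ^+ 2 * rho A ^+ (2 * j.-1) * dotv xs xs.
Proof.
case: j => // j _ /=.
have -> : f j.+1 - f j = (xs - f j) - (xs - f j.+1).
  by rewrite opprB [RHS]addrC addrA subrK.
apply: le_trans (dotv_par _ _) _.
have e1 := cg_err2 j; have e2 := cg_err2 j.+1.
have k1 := kappa_ge1 symA posA.
have r1 := rho_le1.
have rj0 : 0 <= (rho A ^+ 2) ^+ j by rewrite exprn_ge0 // sqr_ge0.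
have X0 := dotv_ge0 xs.
rewrite exprM.
rewrite exprSr in e2.
have h : (rho A ^+ 2) ^+ j * rho A ^+ 2 <= (rho A ^+ 2) ^+ j.
  by rewrite ler_piMr.
have kk : kap <= kap ^+ 2 by rewrite expr2 ler_peMl //; lra.
set K := kap in e1 e2 k1 kk *; set P := (rho A ^+ 2) ^+ j in e1 e2 rj0 h *.
set X := dotv xs xs in e1 e2 X0 *.
have := ler_wpM2r X0 h; have := ler_wpM2r X0 kk; nra.
Qed.

End Final.


Lemma tele_sum (R : realType) k (g : nat -> 'cV[R]_k) m M : (m <= M)%N ->
  \sum_(m.+1 <= j < M.+1) (g j - g j.-1) = g M - g m.
Proof. by move=> hm; rewrite big_add1 /= telescope_sumr. Qed.

Lemma var_term (R : realType) k (c : R) (d D : 'cV[R]_k) : c != 0 ->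
  c * dotv (c^-1 *: d - D) (c^-1 *: d - D) = dotv d d / c - 2 * dotv d D + c * dotv D D.
Proof.
move=> c0; rewrite !(dotvDl, dotvDr, dotvNl, dotvNr, dotvZl, dotvZr) (dotvC D d).
by field.
Qed.

Theorem theorem3p2 (R : realType) (n : nat) (A : 'M[R]_n) (y : 'cV[R]_n)
    (imin imax : nat) (p : nat -> R) :
  spd A ->
  (1 <= imin)%N -> (imin < imax)%N -> (imax <= n)%N ->
  (forall j : nat, (imin <= j <= imax)%N -> 0 < p j) ->
  \sum_(imin <= j < imax.+1) p j = 1 ->
  let kappa := cond2 A in
  let x := invmx A *m y in
  let rho := (Num.sqrt kappa - 1) / (Num.sqrt kappa + 1) in
  let Gamma := \sum_(imin <= j < imax.+1) rho ^+ (2 * j.-1) / p j in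
  let X := tss A y p imin in
  expect p imin imax X = cg_iter A y imax /\
  variance p imin imax X <= 16 * kappa ^+ 2 * normv x ^+ 2 * Gamma.
Proof.
case: n A y => [|n] A y [symA posA] h1 h2 h3 hp hs.
  by move: (leq_trans h2 h3); rewrite ltn0.
case: imin h1 h2 hp hs => // m _ h2 hp hs.
move=> kappa x rh Gamma X.
set f := cg_iter A y.
have hmM : (m <= imax)%N by apply: leq_trans (ltnW h2); apply: leqnSn.
have pn0 j : (m.+1 <= j < imax.+1)%N -> p j != 0.
  by move=> hj; rewrite gt_eqF // hp // -ltnS.
have XE j : X j = (p j)^-1 *: (f j - f j.-1) + f m by [].
have EE : expect p m.+1 imax X = f imax.
  rewrite /expect.
  rewrite (eq_big_nat _ _ (F2 := fun j => (f j - f j.-1) + p j *: f m)); last first.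
    by move=> j hj; rewrite XE scalerDr scalerA mulfV ?scale1r ?pn0.
  by rewrite big_split /= tele_sum // -scaler_suml hs scale1r subrK.
split => //.
set D := f imax - f m.
have sumd : \sum_(m.+1 <= j < imax.+1) (f j - f j.-1) = D by rewrite tele_sum.
rewrite /variance EE.
rewrite (eq_big_nat _ _ (F2 := fun j => dotv (f j - f j.-1) (f j - f j.-1) / p j
   - 2 * dotv (f j - f j.-1) D + p j * dotv D D)); last first.
  move=> j hj; rewrite normv_sq XE.
  have -> : (p j)^-1 *: (f j - f j.-1) + f m - f imax = (p j)^-1 *: (f j - f j.-1) - D.
    by rewrite /D opprB addrA.
  by rewrite var_term ?pn0.
rewrite !big_split /= sumrN -mulr_sumr -mulr_suml hs mul1r -dotv_suml sumd.
have DD0 := dotv_ge0 D.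
suff : \sum_(m.+1 <= i < imax.+1) dotv (f i - f i.-1) (f i - f i.-1) / p i <=
  16 * kappa ^+ 2 * normv x ^+ 2 * Gamma by lra.
rewrite /Gamma mulr_sumr; apply: ler_sum_nat => j hj.
have pj : 0 < p j by rewrite hp // -ltnS.
rewrite mulrA ler_pM2r ?invr_gt0 // normv_sq.
have -> : kappa = opnorm2 A * opnorm2 (invmx A) by [].
have -> : rh = rho A by [].
have := dj_bound symA posA y (j := j) _; rewrite /f.
case/andP: hj => hj _; move=> /(_ (leq_trans (ltn0Sn m) hj)).
by rewrite mulrAC.
Qed.
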